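(* Let $p$ be a prime and let $G$ be a $1$-tuple regular finite group of exponent $p^s$ for some $s\in\mathbb{N}$. For all nontrivial $a,b\in G$ we have $\operatorname{ord}([a,b])<\min\{\operatorname{ord}(a),\operatorname{ord}(b)\}$. In particular, if $p$ is odd, then $G$ is a powerful $p$-group.
   Context: $[a,b]=aba^{-1}b^{-1}$. A finite $p$-group $G$ is powerful if $p$ is odd and $G'\subseteq\mho^1(G)$, or $p=2$ and $G'\subseteq\mho^2(G)$, where $\mho^i(G)$ is generated by the $p^i$-th powers. A finite group $G$ is $1$-tuple regular if for all $g_1,h_1\in G$ of the same order there is a bijection $\Psi\colon G\to G$ such that for every $g\in G$ the assignment $g_1\mapsto h_1, g\mapsto\Psi(g)$ defines an isomorphism $\langle g_1,g\rangle\to\langle h_1,\Psi(g)\rangle$. *)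

(* Defs.v *)
From mathcomp Require Import all_boot all_fingroup all_solvable.
Set Implicit Arguments.
Unset Strict Implicit.
Unset Printing Implicit Defensive.
Import GroupScope.
Local Open Scope group_scope.

(* Paper's commutator convention: [a,b] = a b a^-1 b^-1. *)
Definition comm_ab (gT : finGroupType) (a b : gT) : gT := a * b * a^-1 * b^-1.

Definition mho (gT : finGroupType) (p i : nat) (G : {set gT}) : {set gT} :=
  <<[set x ^+ (p ^ i) | x in G]>>.

Definition powerful (gT : finGroupType) (p : nat) (G : {set gT}) : Prop :=
  if odd p then [~: G, G] \subset mho p 1 G
  else [~: G, G] \subset mho p 2 G.

Definition one_tuple_regular (gT : finGroupType) : Prop :=
  forall g1 h1 : gT, #[g1] = #[h1] ->
    exists Psi : gT -> gT, bijective Psi /\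
      forall g : gT,
        exists f : {morphism <<[set g1; g]>> >-> gT},
          isom <<[set g1; g]>> <<[set h1; Psi g]>> f /\
          f g1 = h1 /\ f g = Psi g.

(* Main.v *)
Require Import Defs.
From mathcomp Require Import all_boot all_fingroup all_solvable.
Local Open Scope group_scope.

Section Aux.
Variable gT : finGroupType.
Hypothesis reg : one_tuple_regular gT.

Lemma transfer (x y : gT) : #[x] = #[y] ->
  forall h : gT, exists g : gT, #[[~ y, h]] = #[[~ x, g]].
Proof.
move=> oxy h.
have [Psi [[Phi PsiK PhiK] HPsi]] := reg x y oxy.
rewrite -(PhiK h); exists (Phi h).
move: (Phi h) => g.
have [f [isof [fx fg]]] := HPsi g.
have injf := isom_inj isof.
have xD : x \in <<[set x; g]>> by apply: mem_gen; rewrite !inE eqxx.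
have gD : g \in <<[set x; g]>> by apply: mem_gen; rewrite !inE eqxx orbT.
rewrite -fx -fg -morphR // order_injm // groupR.
all: by [].
Qed.

Lemma ucn_closed n (x y : gT) : x \in 'Z_n([set: gT]) -> #[x] = #[y] ->
  y \in 'Z_n([set: gT]).
Proof.
elim: n x y => [|n IH] x y.
  rewrite ucn0 !inE => /eqP -> o1.
  by rewrite -order_eq1 -o1 order1.
move=> xZ oxy.
rewrite ucnSnR inE in_setT /=.
rewrite gen_subG; apply/subsetP => c /imset2P [y' h]; rewrite inE => /eqP -> _ ->.
have [g og] := transfer _ _ oxy h.
apply: (IH [~ x, g]) => //.
move: xZ; rewrite ucnSnR inE => /andP [_ /subsetP]; apply.
by apply: mem_commg; rewrite ?inE.
Qed.


Variables (p s : nat).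
Hypotheses (pr : prime p) (expG : exponent [set: gT] = (p ^ s)%N).

Lemma pG : p.-group [set: gT].
Proof. by rewrite -pnat_exponent expG pnatX pnat_id. Qed.

Lemma ord_pow (x : gT) : exists2 i, (i <= s)%N & #[x] = (p ^ i)%N.
Proof.
apply/dvdn_pfactor => //; rewrite -expG; exact: dvdn_exponent (in_setT x).
Qed.

Lemma comm_lt (a b : gT) : a != 1 -> (#[[~ a, b]] < #[a])%N.
Proof.
move=> na.
have nilG := pgroup_nil pG.
have [m Zm] := ucnP _ nilG.
have exP : exists n, a \in 'Z_n([set: gT]) by exists m; rewrite Zm in_setT.
case: (ex_minnP exP) => [[|n]]; first by rewrite ucn0 inE (negbTE na).
move=> aZ amin.
have anZ : a \notin 'Z_n([set: gT]).
  by apply/negP => /amin; rewrite ltnn.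
have cZ : [~ a, b] \in 'Z_n([set: gT]).
  move: aZ; rewrite ucnSnR inE => /andP [_ /subsetP]; apply.
  by apply: mem_commg; rewrite ?inE.
rewrite ltnNge; apply/negP => le.
have [i _ oa] := ord_pow a.
have [j _ oc] := ord_pow [~ a, b].
have p1 := prime_gt1 pr.
have lij : (i <= j)%N by rewrite -(leq_exp2l _ _ p1) -oa -oc.
have dv : (p ^ (j - i) %| #[[~ a, b]])%N by rewrite oc dvdn_exp2l // leq_subr.
have o : #[[~ a, b] ^+ (p ^ (j - i))] = #[a].
  rewrite (orderXdiv dv) oc oa -{1}(subnK lij) expnD mulKn // expn_gt0 (ltnW p1) //.
case/negP: anZ.
have := groupX (p ^ (j - i)) cZ.
move/ucn_closed. move/(_ _ o). by [].
Qed.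


Lemma small_pow (c : gT) : (#[c] < p ^ s)%N -> c \in mho p 1 [set: gT].
Proof.
move=> lc.
have [x0 _ ex0] := exponent_witness (pgroup_nil pG).
rewrite expG in ex0.
have [j _ oc] := ord_pow c.
have p1 := prime_gt1 pr.
have ljs : (j < s)%N by rewrite -(ltn_exp2l _ _ p1) -oc.
have dv : (p ^ (s - j) %| #[x0])%N by rewrite -ex0 dvdn_exp2l // leq_subr.
have oh : #[x0 ^+ (p ^ (s - j))] = #[c].
  rewrite (orderXdiv dv) -ex0 oc -{1}(subnK (ltnW ljs)) expnD mulKn //.
  by rewrite expn_gt0 (ltnW p1).
have [Psi [_ HPsi]] := reg _ _ oh.
have [f [_ [fh fx]]] := HPsi x0.
have xD : x0 \in <<[set x0 ^+ (p ^ (s - j)); x0]>>.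
  by apply: mem_gen; rewrite !inE eqxx orbT.
rewrite -fh morphX // fx.
have e : (p ^ (s - j) = p ^ (s - j.+1) * p)%N by rewrite -expnSr subnSK.
rewrite e expgM; apply: mem_gen; apply/imsetP.
by exists (Psi x0 ^+ (p ^ (s - j.+1))); rewrite ?in_setT // expn1.
Qed.

End Aux.

Theorem lemma4p4 (gT : finGroupType) (p s : nat) :
  prime p ->
  one_tuple_regular gT ->
  exponent [set: gT] = (p ^ s)%N ->
  (forall a b : gT, a != 1 -> b != 1 ->
     (#[comm_ab a b] < minn #[a] #[b])%N) /\
  (odd p -> p.-group [set: gT] /\ powerful p [set: gT]).
Proof.
move=> pr reg expG.
have cab (a b : gT) : comm_ab a b = [~ a^-1, b^-1] by rewrite /comm_ab commgEl conjgE !invgK !mulgA.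
have lt1 (a b : gT) : a != 1 -> (#[comm_ab a b] < #[a])%N.
  by move=> na; rewrite cab -(orderV a); have := comm_lt _ reg _ _ pr expG (a^-1) (b^-1); rewrite eq_invg1; apply.
have key : forall a b : gT, a != 1 -> b != 1 -> (#[comm_ab a b] < minn #[a] #[b])%N.
  move=> a b na nb; rewrite leq_min lt1 //=.
  have -> : comm_ab a b = (comm_ab b a)^-1.
    by rewrite /comm_ab !invMg !invgK !mulgA.
  by rewrite orderV lt1.
split=> // oddp; split; first exact: (pG _ _ _ pr expG).
rewrite /powerful oddp.
- rewrite gen_subG; apply/subsetP => c /imset2P [x y _ _ ->].
  have [->|nx] := eqVneq x 1; first by rewrite comm1g group1.
  apply: (small_pow _ reg _ _ pr expG).
  apply: leq_trans (comm_lt _ reg _ _ pr expG x y nx) _.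
  have [i li ->] := ord_pow _ _ _ pr expG x.
  by rewrite leq_exp2l // prime_gt1.
Qed.
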